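(* Let $F$ be the $\mathbb{C}$-linear anti-automorphism of $\mathcal{A}_0$ determined by $F(xy)=F(y)F(x)$, $F(a)=a$, $F(b)=-b$, $F(1)=1$. Then $F$ extends to a continuous anti-automorphism $F_{conv}$ of $\tilde{\mathcal{A}}_{conv.}$ given by $F_{conv}(a^pb^q)=(-1)^qb^qa^p$.
   Context: $\mathcal{A}_0$ is the $\mathbb{C}$-algebra of polynomials in $a,b$ subject to $ab-ba=b^2$. $\tilde{\mathcal{A}}_{conv.}$ is the algebra of formal series $\sum\gamma_{p,q}a^pb^q$ (product extending that of $\mathcal{A}_0$) such that $|\gamma_{p,q}|\le C_RR^{p+q}q!$ for some $R>1$, $C_R>0$; it can equivalently be described as the series $\sum\delta_{p,q}b^qa^p$ with $|\delta_{p,q}|\le D_RR^{p+q}q!$. It carries its natural inductive limit topology defined by these bounds. *)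

(* Defs.v *)
From HB Require Import structures.
From mathcomp Require Import all_boot all_order all_algebra.
From mathcomp Require Import reals.
From mathcomp Require Import complex.
Set Implicit Arguments. Unset Strict Implicit. Unset Printing Implicit Defensive.
Import Order.TTheory GRing.Theory Num.Theory.
Local Open Scope ring_scope.
Local Open Scope complex_scope.

Section Defs.
Variable R : realType.
Local Notation C := R[i].

(* A formal series  sum_{p,q} x p q a^p b^q  is represented by its family of
   coefficients in the basis a^p b^q (PBW basis of A_0, a on the left). *)
Definition series := nat -> nat -> C.

(* Normal-ordering coefficients of A_0 (relation a b - b a = b^2):
     b^q a^r = sum_{k <= r} comm_coef q r k  a^(r-k) b^(q+k),
   comm_coef q r k = (-1)^k binom(r,k) q(q+1)...(q+k-1).
   (Derived from b^q a = a b^q - q b^(q+1).) *)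
Definition comm_coef (q r k : nat) : C :=
  (-1) ^+ k * ('C(r, k))%:R * (\prod_(i < k) (q + i)%:R).

(* Product of two formal series (extending the product of A_0):
   a^p b^q . a^r b^s = sum_k comm_coef q r k a^(p+r-k) b^(q+k+s). *)
Definition smul (x y : series) : series := fun i j =>
  \sum_(p < i.+1) \sum_(k < j.+1) \sum_(q < (j - k).+1)
     x p q * y (i - p + k)%N (j - k - q)%N * comm_coef q (i - p + k) k.

Definition sadd (x y : series) : series := fun p q => x p q + y p q.
Definition sscale (l : C) (x : series) : series := fun p q => l * x p q.
Definition sopp (x : series) : series := fun p q => - x p q.

Definition mono (p q : nat) : series :=
  fun i j => if (i == p) && (j == q) then 1 else 0.
Definition sone := mono 0 0.
Definition sa := mono 1 0.
Definition sb := mono 0 1.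

(* Conversion of a series  sum_{p,q} d p q b^q a^p  (b on the left)
   into the a-left basis: coefficient of a^i b^j is
   sum_{k <= j} d (i+k) (j-k) comm_coef (j-k) (i+k) k  (finite sum). *)
Definition of_ba (d : series) : series := fun i j =>
  \sum_(k < j.+1) d (i + k)%N (j - k)%N * comm_coef (j - k) (i + k) k.

Definition conv (x : series) : Prop :=
  exists (r c : R), 1 < r /\ 0 < c /\
    forall p q, `|x p q| <= (c * r ^+ (p + q) * (q`!)%:R)%:C.

(* The "ball" of radius eps in the Banach step E_r of the inductive limit. *)
Definition ball_r (r eps : R) (x : series) : Prop :=
  forall p q, `|x p q| <= (eps * r ^+ (p + q) * (q`!)%:R)%:C.

(* Zero-neighbourhoods of the locally convex inductive limit topology
   on \tilde A_conv = ind lim_{r > 1} E_r: absolutely convex subsets of the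
   space whose trace on every step E_r is a zero-neighbourhood of E_r. *)
Definition nbhd0 (U : series -> Prop) : Prop :=
  (forall x, U x -> conv x) /\
  (forall x y (l m : C), U x -> U y -> `|l| + `|m| <= 1 ->
      U (sadd (sscale l x) (sscale m y))) /\
  (forall r, 1 < r -> exists eps, 0 < eps /\
      forall x, ball_r r eps x -> U x).

(* Continuity (at 0, equivalently everywhere) of a linear map of
   \tilde A_conv for the inductive limit topology. *)
Definition lc_continuous (T : series -> series) : Prop :=
  forall V, nbhd0 V -> exists U, nbhd0 U /\ forall x, U x -> V (T x).

Definition Fconv (x : series) : series :=
  of_ba (fun p q => (-1) ^+ q * x p q).

End Defs.

(* Main.v *)
Require Import Defs.
From HB Require Import structures.
From mathcomp Require Import all_boot all_order all_algebra.
From mathcomp Require Import reals.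
From mathcomp Require Import complex.
From mathcomp Require Import zify ring lra.
From Stdlib Require Import FunctionalExtensionality.
Set Implicit Arguments. Unset Strict Implicit. Unset Printing Implicit Defensive.
Import Order.TTheory GRing.Theory Num.Theory.
Local Open Scope ring_scope.

Section Main.
Variable R : realType.
Local Notation C := R[i].
Local Notation series := (series R).
Local Notation cf := (@Defs.comm_coef R).

Lemma sP (x y : series) : (forall i j, x i j = y i j) -> x = y.
Proof. move=> H; do 2 (apply: functional_extensionality => ?); exact: H. Qed.

Lemma c_k0 q r : cf q r 0%N = 1.
Proof. by rewrite /Defs.comm_coef expr0 bin0 big_ord0 !mul1r. Qed.

Lemma c_small q r k : (r < k)%N -> cf q r k = 0.
Proof. by move=> h; rewrite /Defs.comm_coef bin_small // mulr0 mul0r. Qed.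

Lemma c_0S r k : cf 0 r k.+1 = 0.
Proof. by rewrite /Defs.comm_coef big_ord_recl /= addn0 mul0r mulr0. Qed.

Lemma c_pascal q r k : cf q r.+1 k.+1 = cf q r k.+1 - (q + k)%:R * cf q r k.
Proof.
rewrite /Defs.comm_coef binS natrD big_ord_recr /= exprS.
set P := \prod_(i < k) _. ring.
Qed.


Definition linop (O : series -> series) := forall (I : Type) (s : seq I) (a : I -> C) (f : I -> series),
  O (fun i j => \sum_(t <- s) a t * f t i j) = (fun i j => \sum_(t <- s) a t * O (f t) i j).

Lemma linop_sub O : linop O -> forall f g a,
  O (fun i j => f i j - a * g i j) = (fun i j => O f i j - a * O g i j).
Proof.
move=> H f g a.
have E1 : (fun i j => f i j - a * g i j) =
   (fun i j => \sum_(t <- [:: true; false]) (if t then 1 else - a) * (if t then f else g) i j).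
  by apply: sP => i j; rewrite !big_cons big_nil /= mul1r addr0 mulNr.
rewrite E1 H; apply: sP => i j; rewrite !big_cons big_nil /= mul1r addr0 mulNr //.
Qed.

Lemma linop_scale O : linop O -> forall f a,
  O (fun i j => a * f i j) = (fun i j => a * O f i j).
Proof.
move=> H f a.
have E1 : (fun i j => a * f i j) = (fun i j => \sum_(t <- [:: tt]) a * f i j).
  by apply: sP => i j; rewrite big_seq1.
rewrite E1 (H unit [:: tt] (fun _ => a) (fun _ => f)); apply: sP => i j; rewrite big_seq1 //.
Qed.

Lemma linop_iter O n : linop O -> linop (iter n O).
Proof.
move=> H; elim: n => [|n IH] I s a f //=.
by rewrite IH H.
Qed.

Definition Ra (z : series) : series := fun i j =>
  (if i is i'.+1 then z i' j else 0) - (if j is j'.+1 then j'%:R * z i j' else 0).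
Definition Rb (z : series) : series := fun i j => if j is j'.+1 then z i j' else 0.
Definition Nb (z : series) : series := fun i j => - Rb z i j.

Lemma linop_Ra : linop Ra.
Proof.
move=> I s a f; apply: sP => i j; rewrite /Ra.
case: i => [|i]; case: j => [|j]; rewrite ?subr0 ?sub0r.
- by rewrite big1 // => t _; rewrite mulr0.
- rewrite mulr_sumr -sumrN; apply: eq_bigr => t _; rewrite sub0r mulrN mulrCA //.
- by apply: eq_bigr => t _; rewrite subr0.
- rewrite mulr_sumr -sumrB; apply: eq_bigr => t _; rewrite mulrBr mulrCA //.
Qed.

Lemma linop_Rb : linop Rb.
Proof.
move=> I s a f; apply: sP => i j; rewrite /Rb.
case: j => [|j] //; rewrite big1 // => t _; rewrite mulr0 //.
Qed.

Lemma linop_Nb : linop Nb.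
Proof.
move=> I s a f; apply: sP => i j; rewrite /Nb linop_Rb -sumrN.
by apply: eq_bigr => t _; rewrite mulrN.
Qed.

Lemma rel_RaRb z : Ra (Rb z) = (fun i j => Rb (Ra z) i j - Rb (Rb z) i j).
Proof.
apply: sP => i j; rewrite /Ra /Rb.
case: i => [|i]; case: j => [|[|j]]; rewrite ?subr0 ?mul0r ?subrr //.
all: rewrite ?subr0 // -natr1; ring.
Qed.

Lemma rel_RaNb z : Nb (Ra z) = (fun i j => Ra (Nb z) i j - Nb (Nb z) i j).
Proof.
rewrite /Nb; apply: sP => i j.
have -> : Ra (fun i j => - Rb z i j) = (fun i j => - Ra (Rb z) i j).
  by apply: sP => [[|i']] [|j']; rewrite /Ra ?subr0 ?oppr0 ?sub0r ?mulrN ?opprK //; ring.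
rewrite rel_RaRb /=.
have -> : Rb (fun i j => - Rb z i j) = (fun i j => - Rb (Rb z) i j).
  by apply: sP => ? [|?] //=; rewrite oppr0.
ring.
Qed.


Lemma bump0S i : bump 0 i = i.+1.
Proof. by rewrite /bump leq0n add1n. Qed.

Lemma pascal_sum q r (X : nat -> nat -> C) :
 \sum_(k < r.+1) cf q r k * (X k (r.+1 - k)%N - (q + k)%:R * X k.+1 (r - k)%N)
 = \sum_(k < r.+2) cf q r.+1 k * X k (r.+1 - k)%N.
Proof.
rewrite [RHS]big_ord_recl /= c_k0 subn0 mul1r.
under [X in _ = _ + X]eq_bigr => i _ do rewrite bump0S subSS c_pascal mulrBl.
rewrite sumrB.
under eq_bigr => i _ do rewrite mulrBr.
rewrite sumrB big_ord_recl /= c_k0 subn0 mul1r -addrA; congr (_ + _).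
rewrite [X in _ = X - _]big_ord_recr /= c_small // mul0r addr0.
congr (_ - _).
by apply: eq_bigr => i _; rewrite mulrCA mulrA.
Qed.


Section Comm.
Variables (A B : series -> series).
Hypotheses (linA : linop A) (linB : linop B).

Section V1.
Hypothesis hyp1 : forall z, A (B z) = (fun i j => B (A z) i j - B (B z) i j).

Lemma AB_n n z : A (iter n B z) = fun i j => iter n B (A z) i j - n%:R * iter n.+1 B z i j.
Proof.
elim: n => [|n IH].
  by apply: sP => i j /=; rewrite mul0r subr0.
rewrite [iter n.+1 B z]/= hyp1 IH (linop_sub linB); apply: sP => i j /=.
rewrite -natr1; ring.
Qed.

Lemma comm1 r q z : iter r A (iter q B z) =
  fun i j => \sum_(k < r.+1) cf q r k * iter (q + k) B (iter (r - k) A z) i j.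
Proof.
elim: r => [|r IH].
  by apply: sP => i j; rewrite big_ord1 c_k0 mul1r addn0.
have -> : iter r.+1 A (iter q B z) = A (iter r A (iter q B z)) by [].
rewrite IH linA; apply: sP => i j.
rewrite -(pascal_sum q r (fun k m => iter (q + k) B (iter m A z) i j)).
apply: eq_bigr => [[k hk]] _ /=; rewrite AB_n /= subSn // addnS //.
Qed.
End V1.

Section V2.
Hypothesis hyp2 : forall z, B (A z) = (fun i j => A (B z) i j - B (B z) i j).

Lemma BA_n n z : iter n B (A z) = fun i j => A (iter n B z) i j - n%:R * iter n.+1 B z i j.
Proof.
elim: n => [|n IH].
  by apply: sP => i j /=; rewrite mul0r subr0.
rewrite [iter n.+1 B _]/= IH (linop_sub linB) hyp2; apply: sP => i j /=.
rewrite -natr1; ring.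
Qed.

Lemma comm2 r q z : iter q B (iter r A z) =
  fun i j => \sum_(k < r.+1) cf q r k * iter (r - k) A (iter (q + k) B z) i j.
Proof.
elim: r z => [|r IH] z.
  by apply: sP => i j; rewrite big_ord1 c_k0 mul1r addn0.
rewrite iterSr IH; apply: sP => i j.
rewrite -(pascal_sum q r (fun k m => iter m A (iter (q + k) B z) i j)).
apply: eq_bigr => [[k hk]] _ /=; rewrite BA_n (linop_sub (linop_iter _ linA)) /=.
by rewrite subSn // -iterSr addnS.
Qed.
End V2.
End Comm.


Definition Tra (z : series) n i j k :=
  if (k <= n)%N && (n <= i + k)%N then z (i + k - n)%N (j - k)%N * cf (j - k) n k else 0.

Lemma iterRa n z i j : iter n Ra z i j = \sum_(k < j.+1) Tra z n i j k.
Proof.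
elim: n i j => [|n IH] i j.
  rewrite big_ord_recl big1 /=; last by move=> k _; rewrite /Tra bump0S.
  by rewrite /Tra /= addn0 subn0 subn0 c_k0 mulr1 addr0.
have S2 : \sum_(k < j.+1) (if (k <= n.+1)%N && (n.+1 <= i + k)%N then
            z (i + k - n.+1)%N (j - k)%N * cf (j - k) n k else 0)
          = if i is i'.+1 then \sum_(k < j.+1) Tra z n i' j k else 0.
  case: i => [|i].
    apply: big1 => [[k hk]] _ /=.
    case: ifP => //.
    move=> /andP [h1 h2].
    by rewrite c_small ?mulr0.
  apply: eq_bigr => [[k hk]] _ /=; rewrite /Tra.
  case: (eqVneq k n.+1) => [->|hne].
    by rewrite c_small // !mulr0 !if_same.
  have -> : ((k <= n.+1)%N && (n.+1 <= i.+1 + k)%N) = ((k <= n)%N && (n <= i + k)%N).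
    by apply/idP/idP => /andP [h1 h2]; apply/andP; split; lia.
  by case: ifP => // _; rewrite addSn subSS.
have S1 : \sum_(k < j.+1) Tra z n.+1 i j k =
   \sum_(k < j.+1) (if (k <= n.+1)%N && (n.+1 <= i + k)%N then
            z (i + k - n.+1)%N (j - k)%N * cf (j - k) n k else 0)
   - (if j is j'.+1 then j'%:R * \sum_(k < j'.+1) Tra z n i j' k else 0).
  clear S2; case: j => [|j].
    by rewrite !big_ord1 /Tra /= !c_k0 subr0.
  rewrite big_ord_recl [X in _ = X - _]big_ord_recl /= /Tra !c_k0 -addrA; congr (_ + _).
  rewrite mulr_sumr -sumrB; apply: eq_bigr => [[k hk]] _ /=; rewrite !bump0S.
  have -> : ((k.+1 <= n.+1)%N && (n.+1 <= i + k.+1)%N) = ((k <= n)%N && (n <= i + k)%N).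
    by apply/idP/idP => /andP [h1 h2]; apply/andP; split; lia.
  case: ifP => _; last by rewrite mulr0 subr0.
  rewrite addnS !subSS c_pascal subnK; last by lia.
  ring.
rewrite S1 S2 /= /Ra; clear S1 S2.
by case: i => [|i]; case: j => [|j]; rewrite ?IH.
Qed.


Lemma sum_one n m (F : nat -> C) : (forall k, (k < n)%N -> k != m -> F k = 0) ->
  \sum_(k < n) F k = if (m < n)%N then F m else 0.
Proof.
move=> H; case: ifP => hm.
  rewrite (bigD1 (Ordinal hm)) //= big1 ?addr0 // => [[k hk]] /= hne.
  by apply: H => //; apply: contra hne => /eqP e; apply/eqP/val_inj.
by apply: big1 => [[k hk]] _ /=; apply: H => //; apply/eqP => e; subst; rewrite hk in hm.
Qed.

Lemma sum_widen n m (F : nat -> C) : (n <= m)%N -> (forall k, (n <= k)%N -> (k < m)%N -> F k = 0) ->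
  \sum_(k < m) F k = \sum_(k < n) F k.
Proof.
move=> hnm H; rewrite -!(big_mkord xpredT) (@big_cat_nat _ _ _ n 0 m _ _ (leq0n n) hnm) /=.
rewrite [X in _ + X]big_nat_cond [X in _ + X]big1 ?addr0 // => k /andP [/andP [h1 h2] _]; exact: H.
Qed.

Lemma iterRb s w i j : iter s Rb w i j = if (s <= j)%N then w i (j - s)%N else 0.
Proof.
elim: s j => [|s IH] j; first by rewrite subn0.
rewrite /= /Rb; case: j => [|j] //; rewrite IH ltnS subSS //.
Qed.

Lemma smul_mono_r z r s i j : smul z (mono R r s) i j =
  \sum_(k < j.+1) (if (s <= j - k)%N && (k <= r)%N && (r <= i + k)%N
     then z (i + k - r)%N (j - k - s)%N * cf (j - k - s) r k else 0).
Proof.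
rewrite /smul exchange_big /=; apply: eq_bigr => [[k hk]] _ /=.
under eq_bigr => p _.
  rewrite (@sum_one _ (j - k - s)%N (fun q => z p q * mono R r s (i - p + k)%N (j - k - q)%N * cf q (i - p + k) k)); last first.
    move=> q hq hne; rewrite /mono.
    have -> : (j - k - q == s)%N = false by apply/eqP; lia.
    by rewrite andbF mulr0 mul0r.
  over.
rewrite /= (@sum_one _ (i + k - r)%N (fun p => if (j - k - s < (j - k).+1)%N then z p (j - k - s)%N * mono R r s (i - p + k)%N (j - k - (j - k - s))%N * cf (j - k - s) (i - p + k) k else 0)); last first.
  move=> p hp hne; rewrite /mono.
  case: ifP => // _.
  case: (eqVneq (i - p + k)%N r) => [e|ne]; last by rewrite /= mulr0 mul0r.
  by exfalso; move/eqP: hne; apply; lia.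
rewrite /mono.
case: (boolP ((s <= j - k)%N && (k <= r)%N && (r <= i + k)%N)) => h.
  move: h => /andP [/andP [h1 h2] h3].
  have -> : (i + k - r < i.+1)%N by lia.
  have -> : (j - k - s < (j - k).+1)%N by lia.
  have -> : (i - (i + k - r) + k == r)%N by apply/eqP; lia.
  have -> : (j - k - (j - k - s) == s)%N by apply/eqP; lia.
  by rewrite /= mulr1 (_ : (i - (i + k - r) + k)%N = r) //; lia.
case: ifP => // h4; case: ifP => // h5.
case: ifP => [/andP [/eqP e1 /eqP e2]|]; last by rewrite mulr0 mul0r.
exfalso; move/negP: h; apply; apply/andP; split; [apply/andP; split|]; lia.
Qed.

Lemma RMmono z r s : smul z (mono R r s) = iter s Rb (iter r Ra z).
Proof.
apply: sP => i j; rewrite smul_mono_r iterRb.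
case: (leqP s j) => hs.
  rewrite iterRa (@sum_widen (j - s).+1 _ (fun k => if (s <= j - k)%N && (k <= r)%N && (r <= i + k)%N
     then z (i + k - r)%N (j - k - s)%N * cf (j - k - s) r k else 0)); last 2 first.
  - lia.
  - by move=> k h1 h2; have -> : (s <= j - k)%N = false by lia.
  apply: eq_bigr => [[k hk]] _ /=; rewrite /Tra.
  have -> : (s <= j - k)%N = true by lia.
  by rewrite /= (_ : (j - k - s = j - s - k)%N) //; lia.
apply: big1 => [[k hk]] _ /=.
by have -> : (s <= j - k)%N = false by lia.
Qed.


End Main.

Section Main2.
Variable R : realType.
Local Notation C := R[i].
Local Notation series := (series R).
Local Notation cf := (@Defs.comm_coef R).
Local Notation Ra := (@Ra R).
Local Notation Rb := (@Rb R).
Local Notation Nb := (@Nb R).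

Lemma linop_smul_r (x : series) : linop (smul x).
Proof.
move=> I s a f; apply: sP => i j; rewrite /smul.
transitivity (\sum_(t <- s) \sum_(p < i.+1) \sum_(k < j.+1) \sum_(q < (j - k).+1)
   a t * (x p q * f t (i - p + k)%N (j - k - q)%N * cf q (i - p + k) k)).
  rewrite [RHS]exchange_big; apply: eq_bigr => p _.
  rewrite [RHS]exchange_big; apply: eq_bigr => k _.
  rewrite [RHS]exchange_big; apply: eq_bigr => q _.
  by rewrite mulr_sumr mulr_suml; apply: eq_bigr => t _; ring.
apply: eq_bigr => t _; rewrite mulr_sumr; apply: eq_bigr => p _.
rewrite mulr_sumr; apply: eq_bigr => k _; rewrite mulr_sumr //.
Qed.

Lemma linop_smul_l (y : series) : linop (fun x => smul x y).
Proof.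
move=> I s a f; apply: sP => i j; rewrite /smul.
transitivity (\sum_(t <- s) \sum_(p < i.+1) \sum_(k < j.+1) \sum_(q < (j - k).+1)
   a t * (f t p q * y (i - p + k)%N (j - k - q)%N * cf q (i - p + k) k)).
  rewrite [RHS]exchange_big; apply: eq_bigr => p _.
  rewrite [RHS]exchange_big; apply: eq_bigr => k _.
  rewrite [RHS]exchange_big; apply: eq_bigr => q _.
  by rewrite !mulr_suml; apply: eq_bigr => t _; ring.
apply: eq_bigr => t _; rewrite mulr_sumr; apply: eq_bigr => p _.
rewrite mulr_sumr; apply: eq_bigr => k _; rewrite mulr_sumr //.
Qed.

Lemma linop_F : linop (@Fconv R).
Proof.
move=> I s a f; apply: sP => i j; rewrite /Fconv /of_ba.
transitivity (\sum_(t <- s) \sum_(k < j.+1)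
   a t * ((-1) ^+ (j - k) * f t (i + k)%N (j - k)%N * cf (j - k) (i + k) k)).
  rewrite [RHS]exchange_big; apply: eq_bigr => k _.
  by rewrite mulr_sumr !mulr_suml; apply: eq_bigr => t _; ring.
by apply: eq_bigr => t _; rewrite mulr_sumr.
Qed.

Lemma Ra_mono m : Ra (mono R m 0) = mono R m.+1 0.
Proof.
apply: sP => [[|i]] [|j]; rewrite /Ra /mono /= ?subr0 ?mul0r ?andbF //.
all: by case: j => [|j]; rewrite ?mul0r ?andbF ?mulr0 ?subr0.
Qed.

Lemma Rb_mono m n : Rb (mono R m n) = mono R m n.+1.
Proof. by apply: sP => i [|j]; rewrite /Rb /mono //= andbF. Qed.

Lemma mono_it p q : mono R p q = iter q Rb (iter p Ra (sone R)).
Proof.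
have -> : iter p Ra (sone R) = mono R p 0.
  by elim: p => [|p IH] //=; rewrite IH Ra_mono.
by elim: q => [|q IH] //=; rewrite -IH Rb_mono.
Qed.

Lemma iterNb n w : iter n Nb w = fun i j => (-1) ^+ n * iter n Rb w i j.
Proof.
elim: n => [|n IH]; first by apply: sP => i j; rewrite expr0 mul1r.
apply: sP => i j; rewrite /= IH /Nb /Rb; case: j => [|j]; rewrite ?mulr0 ?oppr0 //.
by rewrite exprS mulN1r mulNr.
Qed.

Lemma comm_RaRb r q w : iter r Ra (iter q Rb w) =
  fun i j => \sum_(k < r.+1) cf q r k * iter (q + k) Rb (iter (r - k) Ra w) i j.
Proof. exact: (comm1 (@linop_Ra R) (@linop_Rb R) (@rel_RaRb R)). Qed.

Lemma sign2 n : (-1) ^+ n * (-1) ^+ n = 1 :> C.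
Proof. by rewrite -exprMn mulrNN mulr1 expr1n. Qed.

Lemma comm_RbRa q r w : iter q Rb (iter r Ra w) =
  fun i j => \sum_(k < r.+1) cf q r k * (-1) ^+ k * iter (r - k) Ra (iter (q + k) Rb w) i j.
Proof.
have H := comm2 (@linop_Ra R) (@linop_Nb R) (@rel_RaNb R) r q w.
rewrite iterNb in H.
apply: sP => i j.
have := congr1 (fun F => (-1) ^+ q * F i j) H => /=.
rewrite mulrA sign2 mul1r => ->.
rewrite mulr_sumr; apply: eq_bigr => k _.
rewrite iterNb (linop_scale (linop_iter _ (@linop_Ra R))) exprD.
have := sign2 q; set u := (-1) ^+ q; set v := (-1) ^+ k; move=> hu.
set X := iter _ Ra _ i j; set c0 := cf q r k.
have e : u * (c0 * (u * v * X)) = (u * u) * (c0 * v * X) by ring.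
by rewrite e hu mul1r.
Qed.

Lemma of_ba_mono p q : of_ba (mono R p q) = iter p Ra (mono R 0 q).
Proof.
apply: sP => i j; rewrite /of_ba iterRa; apply: eq_bigr => [[k hk]] _ /=.
rewrite /Tra /mono.
case: (eqVneq (i + k)%N p) => [e|ne].
  by subst p; rewrite leq_addl leqnn subnn /=.
rewrite /= mul0r; case: ifP => // hh.
have -> : (i + k - p == 0)%N = false by apply/eqP; move/andP: hh => [h1 h2]; lia.
by rewrite mul0r.
Qed.

Lemma Fmono p q : Fconv (mono R p q) = fun i j => (-1) ^+ q * iter p Ra (iter q Rb (sone R)) i j.
Proof.
have -> : iter q Rb (sone R) = mono R 0 q by rewrite mono_it.
rewrite -of_ba_mono; apply: sP => i j; rewrite /Fconv /of_ba mulr_sumr.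
apply: eq_bigr => k _; rewrite /mono; case: ifP => [/andP [_ /eqP ->]|_].
  by rewrite mulr1 mul1r.
by rewrite !mulr0 !mul0r mulr0.
Qed.

Lemma Fmono2 p q : Fconv (mono R p q) =
  fun i j => (-1) ^+ q * \sum_(k < p.+1) cf q p k * mono R (p - k) (q + k) i j.
Proof.
rewrite Fmono comm_RaRb; apply: sP => i j; congr (_ * _).
by apply: eq_bigr => k _; rewrite mono_it.
Qed.


Lemma sign_cancel q (c0 v X : C) : (-1) ^+ q * (c0 * ((-1) ^+ q * v * X)) = c0 * v * X.
Proof.
have e : (-1) ^+ q * (c0 * ((-1) ^+ q * v * X)) = ((-1) ^+ q * (-1) ^+ q) * (c0 * v * X) by ring.
by rewrite e sign2 mul1r.
Qed.

Lemma Finv_mono p q : Fconv (Fconv (mono R p q)) = mono R p q.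
Proof.
rewrite Fmono2 (linop_scale linop_F) linop_F; apply: sP => i j.
rewrite [mono R p q]mono_it comm_RbRa mulr_sumr; apply: eq_bigr => k _.
by rewrite Fmono exprD sign_cancel.
Qed.

Lemma Fanti_mono p q r s :
  Fconv (smul (mono R p q) (mono R r s)) = smul (Fconv (mono R r s)) (Fconv (mono R p q)).
Proof.
have L : smul (mono R p q) (mono R r s) =
    fun i j => \sum_(k < r.+1) cf q r k * mono R (r - k + p) (s + (q + k)) i j.
  rewrite RMmono {1}mono_it comm_RaRb (linop_iter _ (@linop_Rb R)); apply: sP => i j.
  by apply: eq_bigr => k _; rewrite -!iterD -mono_it.
have Rh : smul (Fconv (mono R r s)) (Fconv (mono R p q)) =
    fun i j => (-1) ^+ q * (-1) ^+ s *
       iter p Ra (iter q Rb (iter r Ra (iter s Rb (sone R)))) i j.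
  rewrite [Fconv (mono R p q)]Fmono2 (linop_scale (linop_smul_r _)) linop_smul_r.
  apply: sP => i j.
  under eq_bigr do rewrite RMmono.
  move: (congr1 (fun F => F i j) (comm_RaRb p q (Fconv (mono R r s)))) => /= <-.
  rewrite Fmono (linop_scale (linop_iter _ (@linop_Rb R))).
  by rewrite (linop_scale (linop_iter _ (@linop_Ra R))) mulrA.
rewrite Rh L linop_F; apply: sP => i j.
rewrite comm_RbRa (linop_iter _ (@linop_Ra R)) !mulr_sumr; apply: eq_bigr => k _.
rewrite Fmono -!iterD (addnC p) (addnC s) !exprD.
set X := iter _ Ra _ i j.
ring.
Qed.


Lemma L_F (x x' : series) i j : (forall p q, (p <= i + j)%N -> (q <= j)%N -> x p q = x' p q) ->
  Fconv x i j = Fconv x' i j.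
Proof.
move=> H; rewrite /Fconv /of_ba; apply: eq_bigr => [[k hk]] _ /=.
by rewrite H //; lia.
Qed.

Lemma L_smul (x x' y y' : series) i j :
  (forall p q, (p <= i)%N -> (q <= j)%N -> x p q = x' p q) ->
  (forall p q, (p <= i + j)%N -> (q <= j)%N -> y p q = y' p q) ->
  smul x y i j = smul x' y' i j.
Proof.
move=> Hx Hy; rewrite /smul; apply: eq_bigr => [[p hp]] _ /=.
apply: eq_bigr => [[k hk]] _ /=; apply: eq_bigr => [[q hq]] _ /=.
by rewrite Hx ?Hy //; lia.
Qed.

Definition pairs N := [seq (p, q) | p <- iota 0 N, q <- iota 0 N].
Definition tr N (x : series) : series := fun i j =>
  \sum_(t <- pairs N) x t.1 t.2 * mono R t.1 t.2 i j.

Lemma tr_eq N (x : series) i j : (i < N)%N -> (j < N)%N -> tr N x i j = x i j.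
Proof.
move=> hi hj; rewrite /tr /pairs big_allpairs /=.
rewrite (bigD1_seq i) ?iota_uniq ?mem_iota //=.
rewrite [X in _ + X]big1 ?addr0; last first.
  move=> p hp; rewrite big1 // => q _; rewrite /mono.
  have -> : (i == p) = false by apply/eqP => e; rewrite e eqxx in hp.
  by rewrite /= mulr0.
rewrite (bigD1_seq j) ?iota_uniq ?mem_iota //= [X in _ + X]big1 ?addr0; last first.
  move=> q hq; rewrite /mono.
  have -> : (j == q) = false by apply/eqP => e; rewrite e eqxx in hq.
  by rewrite andbF mulr0.
by rewrite /mono !eqxx mulr1.
Qed.

Lemma Finv (x : series) : Fconv (Fconv x) = x.
Proof.
apply: sP => i j.
rewrite -[RHS](@tr_eq (i + j + j).+1) ?ltnS; [|lia|lia].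
transitivity (Fconv (Fconv (tr (i + j + j).+1 x)) i j).
  apply: L_F => p q hp hq; apply: L_F => p' q' hp' hq'.
  by rewrite tr_eq //; lia.
rewrite /tr linop_F linop_F; apply: eq_bigr => t _; rewrite Finv_mono //.
Qed.


Lemma smul_suml (y : series) (I : Type) (s : seq I) (a : I -> C) (f : I -> series) :
  smul (fun i j => \sum_(t <- s) a t * f t i j) y = (fun i j => \sum_(t <- s) a t * smul (f t) y i j).
Proof. exact: (linop_smul_l y s a f). Qed.

Lemma Fanti (x y : series) : Fconv (smul x y) = smul (Fconv y) (Fconv x).
Proof.
apply: sP => i j.
transitivity (Fconv (smul (tr (i + j + j).+1 x) (tr (i + j + j).+1 y)) i j).
  by apply: L_F => p q hp hq; apply: L_smul => p' q' hp' hq'; rewrite tr_eq //; lia.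
transitivity (smul (Fconv (tr (i + j + j).+1 y)) (Fconv (tr (i + j + j).+1 x)) i j); last first.
  by apply: L_smul => p q hp hq; apply: L_F => p' q' hp' hq'; rewrite tr_eq //; lia.
rewrite /tr.
rewrite smul_suml linop_F.
under eq_bigr do rewrite linop_smul_r linop_F.
rewrite [Fconv (fun i j => \sum_(t <- pairs _) y _ _ * _)]linop_F.
rewrite [Fconv (fun i j => \sum_(t <- pairs _) x _ _ * _)]linop_F.
rewrite smul_suml.
under [RHS]eq_bigr do rewrite linop_smul_r.
under eq_bigr do rewrite mulr_sumr.
under [RHS]eq_bigr do rewrite mulr_sumr.
rewrite exchange_big; apply: eq_bigr => u _; apply: eq_bigr => t _.
rewrite mulrCA; congr (_ * (_ * _)).
exact: (congr1 (fun F => F i j) (Fanti_mono _ _ _ _)).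
Qed.

End Main2.

Lemma fact_prod q k : (q`! * \prod_(t < k) (q + t) <= (q + k)`!)%N.
Proof.
elim: k => [|k IH]; first by rewrite big_ord0 muln1 addn0.
rewrite big_ord_recr /= mulnA addnS factS mulnC.
by apply: leq_mul => //; rewrite mulnC.
Qed.

Lemma bin_le2 n k : ('C(n, k) <= 2 ^ n)%N.
Proof.
elim: n k => [|n IH] [|k]; rewrite ?bin0 ?bin0n ?expn_gt0 //.
by rewrite binS expnS mul2n -addnn leq_add.
Qed.

Lemma coef_bound i j k : (k <= j)%N ->
  ((j - k)`! * ('C(i + k, k) * \prod_(t < k) (j - k + t)) <= 2 ^ (i + j) * j`!)%N.
Proof.
move=> hk.
have h1 := fact_prod (j - k) k; rewrite subnK // in h1.
have h2 : ('C(i + k, k) <= 2 ^ (i + j))%N.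
  apply: leq_trans (bin_le2 _ _) _; rewrite leq_exp2l //; lia.
rewrite mulnCA; exact: leq_mul.
Qed.

Section Main3.
Local Open Scope complex_scope.
Variable R : realType.
Local Notation C := R[i].
Local Notation series := (series R).
Local Notation cf := (@Defs.comm_coef R).

Lemma norm_cf q n k : `|cf q n k| = ('C(n, k) * \prod_(t < k) (q + t))%:R.
Proof.
rewrite /Defs.comm_coef !normrM normrX normrN1 expr1n mul1r normr_nat -natr_prod normr_nat.
by rewrite natrM.
Qed.

Lemma natC n : ((n%:R : R)%:C) = n%:R :> C.
Proof. exact: rmorph_nat. Qed.

Lemma mulC (a b : R) : (a * b)%:C = a%:C * b%:C :> C.
Proof. exact: rmorphM. Qed.

Lemma expC (a : R) n : (a ^+ n)%:C = a%:C ^+ n :> C.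
Proof. exact: rmorphXn. Qed.

Lemma Fbound (r e : R) (x : series) : 0 <= r -> 0 <= e -> ball_r r e x -> ball_r (4 * r) e (Fconv x).
Proof.
move=> r0 e0 H i j.
rewrite /Fconv /of_ba.
apply: le_trans (ler_norm_sum _ _ _) _.
have E0 : 0 <= e%:C * r%:C ^+ (i + j) by rewrite mulr_ge0 ?exprn_ge0 ?ler0c.
apply: (@le_trans _ _ (\sum_(k < j.+1) (e%:C * r%:C ^+ (i + j) * (2 ^ (i + j) * j`!)%:R))).
  apply: ler_sum => [[k hk]] _ /=.
  set c0 := Defs.comm_coef _ _ _ _.
  rewrite normrM norm_cf normrM normrX normrN1 expr1n mul1r.
  apply: le_trans (ler_wpM2r (ler0n _ _) (H _ _)) _.
  rewrite (_ : (i + k + (j - k) = i + j)%N); last by lia.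
  rewrite !mulC expC natC -!mulrA -natrM.
  apply: ler_wpM2l; first by rewrite ler0c.
  apply: ler_wpM2l; first by rewrite exprn_ge0 ?ler0c.
  by rewrite ler_nat; apply: coef_bound; lia.
have -> : (e * (4 * r) ^+ (i + j) * j`!%:R)%:C = e%:C * r%:C ^+ (i + j) * (4 ^ (i + j) * j`!)%:R.
  rewrite !mulC expC mulC exprMn !natC natrM natrX; ring.
rewrite sumr_const card_ord -[_ *+ j.+1]mulr_natr -!mulrA -natrM.
apply: ler_wpM2l; first by rewrite ler0c.
apply: ler_wpM2l; first by rewrite exprn_ge0 ?ler0c.
rewrite ler_nat.
have -> : (4 ^ (i + j) = 2 ^ (i + j) * 2 ^ (i + j))%N by rewrite -expnMn.
have h : (j.+1 <= 2 ^ (i + j))%N.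
  apply: leq_trans (ltn_expl j (isT : (1 < 2)%N)) _.
  by rewrite leq_exp2l //; lia.
rewrite [X in (_ <= X)%N]mulnAC; exact: leq_mul.
Qed.


Lemma addC (a b : R) : (a + b)%:C = a%:C + b%:C :> C.
Proof. exact: rmorphD. Qed.

Lemma ball_conv r e (x : series) : 1 < r -> 0 < e -> ball_r r e x -> conv x.
Proof. by move=> hr he H; exists r, e. Qed.

Lemma conv_F (x : series) : conv x -> conv (Fconv x).
Proof.
move=> [r [c [hr [hc H]]]]; exists (4 * r), c; split; first lra.
split => //; apply: Fbound => //; lra.
Qed.

Lemma conv_comb (x y : series) (l m : C) : conv x -> conv y -> `|l| + `|m| <= 1 ->
  conv (sadd (sscale l x) (sscale m y)).
Proof.
move=> [r1 [c1 [hr1 [hc1 H1]]]] [r2 [c2 [hr2 [hc2 H2]]]] hlm.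
have hl : `|l| <= 1 by apply: le_trans hlm; rewrite lerDl normr_ge0.
have hm : `|m| <= 1 by apply: le_trans hlm; rewrite lerDr normr_ge0.
exists (Num.max r1 r2), (c1 + c2); split; first by rewrite lt_max hr1.
split; first lra.
move=> p q; rewrite /sadd /sscale.
apply: le_trans (ler_normD _ _) _.
have B1 : `|l * x p q| <= (c1 * Num.max r1 r2 ^+ (p + q) * q`!%:R)%:C.
  rewrite normrM; apply: le_trans (ler_wpM2r (normr_ge0 _) hl) _; rewrite mul1r.
  apply: le_trans (H1 p q) _; rewrite lecR.
  apply: ler_wpM2r => //; apply: ler_wpM2l; first lra.
  have r10 : 0 <= r1 by lra.
  have mx : r1 <= Num.max r1 r2 by rewrite le_max lexx.
  by apply: lerXn2r => //; rewrite nnegrE //; apply: le_trans mx.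
have B2 : `|m * y p q| <= (c2 * Num.max r1 r2 ^+ (p + q) * q`!%:R)%:C.
  rewrite normrM; apply: le_trans (ler_wpM2r (normr_ge0 _) hm) _; rewrite mul1r.
  apply: le_trans (H2 p q) _; rewrite lecR.
  apply: ler_wpM2r => //; apply: ler_wpM2l; first lra.
  have r20 : 0 <= r2 by lra.
  have mx : r2 <= Num.max r1 r2 by rewrite le_max lexx orbT.
  by apply: lerXn2r => //; rewrite nnegrE //; apply: le_trans mx.
apply: le_trans (lerD B1 B2) _.
by rewrite -addC lecR -!mulrDl lexx.
Qed.

Lemma F_add (x y : series) : Fconv (sadd x y) = sadd (Fconv x) (Fconv y).
Proof.
apply: sP => i j; rewrite /Fconv /of_ba /sadd -big_split; apply: eq_bigr => k _ /=; ring.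
Qed.

Lemma F_scale (l : C) (x : series) : Fconv (sscale l x) = sscale l (Fconv x).
Proof.
apply: sP => i j; rewrite /Fconv /of_ba /sscale mulr_sumr; apply: eq_bigr => k _ /=; ring.
Qed.

End Main3.

Theorem corollary1p1p4 (R : realType) :
  (forall x : series R, conv x -> conv (Fconv x)) /\
  (forall (x y : series R), Fconv (sadd x y) = sadd (Fconv x) (Fconv y)) /\
  (forall (l : R[i]) (x : series R), Fconv (sscale l x) = sscale l (Fconv x)) /\
  (forall x y : series R, conv x -> conv y -> Fconv x = Fconv y -> x = y) /\
  (forall y : series R, conv y -> exists x, conv x /\ Fconv x = y) /\
  (forall x y : series R, conv x -> conv y ->
     Fconv (smul x y) = smul (Fconv y) (Fconv x)) /\
  Fconv (sone R) = sone R /\ Fconv (sa R) = sa R /\ Fconv (sb R) = sopp (sb R) /\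
  (forall p q : nat,
     Fconv (mono R p q) = sscale ((-1) ^+ q) (smul (mono R 0 q) (mono R p 0))) /\
  lc_continuous (@Fconv R).
Proof.
split; first exact: conv_F.
split; first exact: F_add.
split; first exact: F_scale.
split; first by move=> x y _ _ h; rewrite -(Finv x) h Finv.
split; first by move=> y hy; exists (Fconv y); split; [exact: conv_F | exact: Finv].
split; first by move=> x y _ _; exact: Fanti.
split.
  rewrite /sone Fmono2; apply: sP => i j; rewrite big_ord1 c_k0 expr0 !mul1r //.
split.
  rewrite /sa Fmono2; apply: sP => i j; rewrite big_ord_recr big_ord1 /= c_k0 c_0S.
  by rewrite expr0 mul0r addr0 !mul1r.
split.
  rewrite /sb Fmono2; apply: sP => i j; rewrite big_ord1 c_k0 expr1 /sopp /=.
  by rewrite mul1r mulN1r.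
split.
  move=> p q; rewrite RMmono Fmono; apply: sP => i j; rewrite /sscale /=.
  by rewrite (mono_it R 0 q).
move=> V [V1 [V2 V3]].
exists (fun x => conv x /\ V (Fconv x)); split; last by move=> x [].
split; first by move=> x [].
split.
  move=> x y l m [cx vx] [cy vy] hlm; split; first exact: conv_comb.
  by rewrite F_add !F_scale; apply: V2.
move=> r hr; have [eps [heps Hb]] := V3 (4 * r) ltac:(lra).
exists eps; split => // x hx; split; first exact: (ball_conv hr heps).
by apply: Hb; apply: Fbound => //; lra.
Qed.
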